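(* Let $\mathcal P$ be a finite-dimensional Poisson $n$-Lie algebra over an algebraically closed field of characteristic zero. Then $\mathcal P$ is solvable if and only if the $n$-Lie algebra $\mathcal P_L=(\mathcal P,[-,\dots,-])$ is solvable and the associative algebra $\mathcal P_A=(\mathcal P,\cdot)$ is nilpotent.
   Context: A Poisson $n$-Lie algebra is a commutative associative algebra $(\mathcal P,\cdot)$ with an $n$-linear skew-symmetric bracket satisfying the fundamental identity $[x_1,\dots,x_{n-1},[y_1,\dots,y_n]]=\sum_{i=1}^n[y_1,\dots,[x_1,\dots,x_{n-1},y_i],\dots,y_n]$ and the Leibniz rule $[y\cdot z,x_2,\dots,x_n]=y\cdot[z,x_2,\dots,x_n]+z\cdot[y,x_2,\dots,x_n]$. Products/brackets of subspaces are linear spans. $\mathcal P$ is solvable if $\mathcal P^{(s)}=0$ for some $s$, where $\mathcal P^{(1)}=\mathcal P$, $\mathcal P^{(k+1)}=[\mathcal P^{(k)},\mathcal P^{(k)},\mathcal P,\dots,\mathcal P]+\mathcal P^{(k)}\cdot\mathcal P^{(k)}$. $\mathcal P_L$ is solvable if $L^{(s)}=0$ for some $s$, where $L^{(1)}=\mathcal P$, $L^{(k+1)}=[L^{(k)},L^{(k)},\mathcal P,\dots,\mathcal P]$. $\mathcal P_A$ is nilpotent if all products of some fixed number of elements vanish. *)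

(* Defs.v *)
From HB Require Import structures.
From mathcomp Require Import all_boot all_order all_algebra all_fingroup.
Set Implicit Arguments. Unset Strict Implicit. Unset Printing Implicit Defensive.
Import GRing.Theory.
Local Open Scope ring_scope.

Section PoissonNLie.
Variables (F : fieldType) (V : vectType F) (n : nat).
Variable mul : V -> V -> V.
Variable br : ('I_n -> V) -> V.

Definition upd (f : 'I_n -> V) (i : nat) (v : V) : 'I_n -> V :=
  fun k => if (k : nat) == i then v else f k.

Definition comm_assoc_algebra : Prop :=
  [/\ forall a u v w, mul (a *: u + v) w = a *: mul u w + mul v w,
      forall u v, mul u v = mul v u &
      forall u v w, mul u (mul v w) = mul (mul u v) w].

Definition multilinear : Prop :=
  forall (f : 'I_n -> V) (i : 'I_n) (a : F) (u v : V),
    br (upd f i (a *: u + v)) = a *: br (upd f i u) + br (upd f i v).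

Definition skew_symmetric : Prop :=
  forall (f : 'I_n -> V) (s : 'S_n),
    br (fun k => f (s k)) = (-1) ^+ odd_perm s *: br f.

(* [x_1,...,x_{n-1},[y_1,...,y_n]] = sum_i [y_1,...,[x_1,...,x_{n-1},y_i],...,y_n];
   the x's are the first n-1 entries of x (its last entry is ignored). *)
Definition fundamental_identity : Prop :=
  forall (x y : 'I_n -> V),
    br (upd x n.-1 (br y)) = \sum_(i < n) br (upd y i (br (upd x n.-1 (y i)))).

Definition leibniz_rule : Prop :=
  forall (x : 'I_n -> V) (y z : V),
    br (upd x 0 (mul y z)) = mul y (br (upd x 0 z)) + mul z (br (upd x 0 y)).

Definition is_poisson_nlie : Prop :=
  [/\ comm_assoc_algebra, multilinear, skew_symmetric,
      fundamental_identity & leibniz_rule].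

Inductive span (S : V -> Prop) : V -> Prop :=
  | span_gen v : S v -> span S v
  | span0 : span S 0
  | spanD u v : span S u -> span S v -> span S (u + v)
  | spanZ (a : F) v : span S v -> span S (a *: v).

Definition br_sub (A : V -> Prop) : V -> Prop :=
  span (fun v => exists f : 'I_n -> V,
    [/\ forall k : 'I_n, (k : nat) = 0%N -> A (f k),
        forall k : 'I_n, (k : nat) = 1%N -> A (f k) & v = br f]).

Definition mul_sub (A : V -> Prop) : V -> Prop :=
  span (fun v => exists a b, [/\ A a, A b & v = mul a b]).

Definition sum_sub (A B : V -> Prop) : V -> Prop :=
  fun v => exists a b, [/\ A a, B b & v = a + b].

(* derived_P k is P^(k+1) of the paper; derived_L k is L^(k+1) *)
Fixpoint derived_P (k : nat) : V -> Prop :=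
  match k with
  | 0 => fun _ => True
  | k'.+1 => sum_sub (br_sub (derived_P k')) (mul_sub (derived_P k'))
  end.

Fixpoint derived_L (k : nat) : V -> Prop :=
  match k with
  | 0 => fun _ => True
  | k'.+1 => br_sub (derived_L k')
  end.

Definition is_zero_sub (A : V -> Prop) : Prop := forall v, A v -> v = 0.

Definition poisson_solvable : Prop := exists s, is_zero_sub (derived_P s).
Definition nlie_solvable : Prop := exists s, is_zero_sub (derived_L s).

(* all products of N+1 elements vanish (associativity makes bracketing irrelevant) *)
Definition assoc_nilpotent : Prop :=
  exists N : nat, forall (x : V) (xs : seq V), size xs = N -> foldl mul x xs = 0.

End PoissonNLie.

(* Main.v *)
Require Import Defs.
From HB Require Import structures.
From mathcomp Require Import all_boot all_order all_algebra all_fingroup.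
From mathcomp Require Import zify.
From Stdlib Require Import FunctionalExtensionality.
Import Defs.
Set Implicit Arguments. Unset Strict Implicit. Unset Printing Implicit Defensive.
Import GRing.Theory.
Local Open Scope ring_scope.

Section Aux.
Variables (F : fieldType) (V : vectType F) (n : nat).
Variable mul : V -> V -> V.
Variable br : ('I_n -> V) -> V.
Hypothesis hn : (2 <= n)%N.
Hypothesis hP : is_poisson_nlie mul br.

Record subsp (T : V -> Prop) : Prop := Subsp {
  s0 : T 0; sD : forall u v, T u -> T v -> T (u + v); sZ : forall (a : F) v, T v -> T (a *: v) }.

Lemma span_subsp (G : V -> Prop) : subsp (span G).
Proof. split; [exact: span0 | exact: spanD | exact: spanZ]. Qed.

Lemma span_sub (G : V -> Prop) (T : V -> Prop) : subsp T -> (forall v, G v -> T v) ->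
  forall v, span G v -> T v.
Proof. by case=> T0 TD TZ hG v; elim=> //; auto. Qed.

Lemma span_mono (G G' : V -> Prop) : (forall v, G v -> G' v) -> forall v, span G v -> span G' v.
Proof. move=> h; apply: span_sub; first exact: span_subsp. by move=> v /h; apply: span_gen. Qed.

Lemma sum_subsp A B : subsp A -> subsp B -> subsp (sum_sub A B).
Proof.
case=> A0 AD AZ [B0 BD BZ]; split.
- by exists 0, 0; rewrite addr0.
- move=> u v [a [b [ha hb ->]]] [a' [b' [ha' hb' ->]]].
  exists (a + a'), (b + b'); split; auto. by rewrite addrACA.
- move=> c v [a [b [ha hb ->]]]; exists (c *: a), (c *: b); split; auto.
  by rewrite scalerDr.
Qed.

Lemma zero_subsp : subsp (fun v => v = 0).
Proof. split=> [//|u v -> ->|a v ->]; by rewrite ?addr0 ?scaler0. Qed.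

Fixpoint Apow (k : nat) : V -> Prop :=
  match k with
  | 0 => fun _ => True
  | k'.+1 => span (fun v => exists a b, Apow k' b /\ v = mul a b)
  end.

Lemma Apow_subsp k : subsp (Apow k).
Proof. case: k => [|k] /=; [by split | exact: span_subsp]. Qed.

Lemma ApowS k a b : Apow k b -> Apow k.+1 (mul a b).
Proof. by move=> hb; apply: span_gen; exists a, b. Qed.

Let hMUL : forall (a : F) u v w, mul (a *: u + v) w = a *: mul u w + mul v w.
Proof. by move: hP; rewrite /is_poisson_nlie /comm_assoc_algebra => -[[h _ _] _ _ _ _]. Qed.
Let hCOM : forall u v, mul u v = mul v u.
Proof. by move: hP; rewrite /is_poisson_nlie /comm_assoc_algebra => -[[_ h _] _ _ _ _]. Qed.
Let hASS : forall u v w, mul u (mul v w) = mul (mul u v) w.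
Proof. by move: hP; rewrite /is_poisson_nlie /comm_assoc_algebra => -[[_ _ h] _ _ _ _]. Qed.
Let hML : multilinear br.
Proof. by move: hP; rewrite /is_poisson_nlie => -[]. Qed.
Let hSK : skew_symmetric br.
Proof. by move: hP; rewrite /is_poisson_nlie => -[]. Qed.
Let hLB : leibniz_rule mul br.
Proof. by move: hP; rewrite /is_poisson_nlie => -[]. Qed.

Lemma mulC u v : mul u v = mul v u.
Proof. exact: hCOM. Qed.
Lemma mulA u v w : mul u (mul v w) = mul (mul u v) w.
Proof. exact: hASS. Qed.
Lemma mulDl u v w : mul (u + v) w = mul u w + mul v w.
Proof. by have := hMUL 1 u v w; rewrite !scale1r. Qed.
Lemma mulZl (a : F) u w : mul (a *: u) w = a *: mul u w.
Proof.
have h0 : mul 0 w = 0.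
  have := hMUL 1 0 0 w; rewrite !scale1r addr0 => h.
  by apply: (addrI (mul 0 w)); rewrite addr0 -h.
by rewrite -[a *: u]addr0 hMUL h0 addr0.
Qed.
Lemma mul0l w : mul 0 w = 0.
Proof. by have := mulZl 0 0 w; rewrite !scale0r. Qed.
Lemma mulSA k a b : Apow k b -> Apow k.+1 (mul b a).
Proof. by rewrite mulC; apply: ApowS. Qed.

Lemma ApowN_sub k u v : Apow k u -> Apow k v -> Apow k (u + v).
Proof. exact: (sD (Apow_subsp k)). Qed.
Lemma ApowZ k (a : F) v : Apow k v -> Apow k (a *: v).
Proof. exact: (sZ (Apow_subsp k)). Qed.

Let i0 : 'I_n := Ordinal (ltn_trans (ltnSn 0) hn).
Let i1 : 'I_n := Ordinal hn.

Lemma upd_id (f : 'I_n -> V) (i : 'I_n) : upd f i (f i) = f.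
Proof. apply: functional_extensionality => k; rewrite /upd; case: eqP => // /val_inj -> //. Qed.

Lemma br_upd0 (f : 'I_n -> V) (i : 'I_n) : br (upd f i 0) = 0.
Proof.
have := hML f i 1 0 0; rewrite !scale1r addr0 => h.
by apply: (addrI (br (upd f i 0))); rewrite addr0 -h.
Qed.

Lemma br_updD (f : 'I_n -> V) (i : 'I_n) u v : br (upd f i (u + v)) = br (upd f i u) + br (upd f i v).
Proof. by have := hML f i 1 u v; rewrite !scale1r. Qed.

Lemma br_span (i : 'I_n) (G : V -> Prop) (T : V -> Prop) (f : 'I_n -> V) : subsp T ->
  (forall v, G v -> T (br (upd f i v))) -> forall v, span G v -> T (br (upd f i v)).
Proof.
case=> T0 TD TZ hG v; elim=> //.
- by rewrite br_upd0.
- move=> u w _ hu _ hw. by rewrite br_updD; auto.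
- move=> a w _ hw. by rewrite -[a *: w]addr0 hML br_upd0 addr0; auto.
Qed.

Lemma ideal0 k (f : 'I_n -> V) : Apow k (f i0) -> Apow k (br f).
Proof.
elim: k f => [//|k IH] f hf.
rewrite -(upd_id f i0). move: (f i0) hf => v.
apply: br_span; first exact: Apow_subsp.
move=> _ [a [b [hb ->]]].
have -> := hLB f a b.
apply: ApowN_sub; first by apply: ApowS; apply: IH.
exact: mulSA.
Qed.

Lemma ideal1 k (f : 'I_n -> V) : Apow k (f i1) -> Apow k (br f).
Proof.
move=> h.
have := hSK f (tperm i0 i1). rewrite odd_tperm.
have -> : (i0 != i1) = true by [].
rewrite expr1 scaleN1r => /(congr1 (fun x => - x)). rewrite opprK => <-.
rewrite -scaleN1r; apply: ApowZ; apply: ideal0. by rewrite tpermL.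
Qed.

Lemma Apow_foldl x xs : Apow (size xs) (foldl mul x xs).
Proof.
elim/last_ind: xs => [//|xs a IH].
by rewrite foldl_rcons size_rcons mulC; apply: ApowS.
Qed.

Lemma mul_span_r a (G : V -> Prop) (T : V -> Prop) : subsp T ->
  (forall g, G g -> T (mul a g)) -> forall b, span G b -> T (mul a b).
Proof.
case=> T0 TD TZ hG b; elim=> //.
- by rewrite mulC mul0l.
- move=> u w _ hu _ hw. by rewrite mulC mulDl mulC (mulC w); auto.
- move=> c w _ hw. by rewrite mulC mulZl mulC; auto.
Qed.

Lemma Apow_split i j v : Apow (i + j).+1 v ->
  span (fun w => exists u x, [/\ Apow i u, Apow j x & w = mul u x]) v.
Proof.
elim: i v => [|i IH] v /=.
  apply: span_mono => _ [a [b [hb ->]]]. by exists a, b.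
apply: span_sub; first exact: span_subsp.
move=> _ [a [b [hb ->]]].
apply: (mul_span_r (T := span _)); [exact: span_subsp | | exact: IH].
move=> _ [u [x [hu hx ->]]]. apply: span_gen. exists (mul a u), x; split; [exact: ApowS | done | by rewrite mulA].
Qed.

Lemma Apow_derivedP k v : Apow (2 ^ k).-1 v -> derived_P mul br k v.
Proof.
elim: k v => [//|k IH] v.
have -> : (2 ^ k.+1).-1 = (((2 ^ k).-1 + (2 ^ k).-1).+1)%N.
  have := expn_gt0 2 k; rewrite expnS; lia.
move/Apow_split => h. exists 0, v; split.
- exact: span0.
- move: v h; apply: span_mono => _ [u [x [hu hx ->]]].
  by exists u, x; split; auto.
- by rewrite add0r.
Qed.

Lemma derivedL_P k v : derived_L br k v -> derived_P mul br k v.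
Proof.
elim: k v => [//|k IH] v /= h. exists v, 0; split.
- move: v h; apply: span_mono => _ [f [h0 h1 ->]]. exists f; split; auto.
- exact: span0.
- by rewrite addr0.
Qed.

Lemma step1 k v : derived_P mul br k v -> sum_sub (derived_L br k) (Apow 1) v.
Proof.
elim: k v => [|k IH] v /=.
  by move=> _; exists v, 0; split => //; [exact: span0 | rewrite addr0].
move=> [a [b [ha hb ->]]].
have hT : subsp (sum_sub (br_sub br (derived_L br k)) (Apow 1)).
  apply: sum_subsp; [exact: span_subsp | exact: Apow_subsp].
have hb' : Apow 1 b.
  move: b hb; apply: span_mono => _ [x [y [_ _ ->]]]. by exists x, y.
suff [l [p [hl hp ->]]] : sum_sub (br_sub br (derived_L br k)) (Apow 1) a.
  exists l, (p + b); split; [done | exact: (@ApowN_sub 1 p b hp hb') | by rewrite addrA].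
move: a ha; apply: span_sub; first exact: hT.
move=> _ [f [h0 h1 ->]].
have e0 : (i0 : nat) = 0%N by [].
have e1 : (i1 : nat) = 1%N by [].
have [l0 [p0 [hl0 hp0 E0]]] := IH _ (h0 i0 e0).
have [l1 [p1 [hl1 hp1 E1]]] := IH _ (h1 i1 e1).
rewrite -(upd_id f i0) E0 br_updD.
set g := upd f i0 l0.
have gi1 : g i1 = f i1 by [].
rewrite -(upd_id g i1) gi1 E1 br_updD.
have hA : forall x, Apow 1 x -> sum_sub (br_sub br (derived_L br k)) (Apow 1) x.
  by move=> x hx; exists 0, x; split; [exact: span0 | done | rewrite add0r].
apply: (sD hT); last by apply: hA; apply: ideal0; rewrite /upd eqxx.
apply: (sD hT); last by apply: hA; apply: ideal1; rewrite /upd eqxx.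
exists (br (upd g i1 l1)), 0; split; [| exact: (s0 (Apow_subsp 1)) | by rewrite addr0].
apply: span_gen; exists (upd g i1 l1); split; [move=> j hj; rewrite /g /upd hj /i1 /i0 //= | move=> j hj; rewrite /upd hj /i1 //= | done].
Qed.

Lemma step2 m (X : V -> Prop) : (forall v, X v -> Apow m.+1 v) ->
  forall v, sum_sub (br_sub br X) (mul_sub mul X) v -> Apow m.+2 v.
Proof.
move=> hX _ [a [b [ha hb ->]]]. apply: ApowN_sub.
- move: a ha; apply: span_sub; first exact: Apow_subsp.
  move=> _ [f [h0 h1 ->]].
  have hf0 := hX _ (h0 i0 erefl). have hf1 := hX _ (h1 i1 erefl).
  rewrite -(upd_id f i0). move: (f i0) hf0 => w.
  apply: br_span; first exact: Apow_subsp.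
  move=> _ [a [c [hc ->]]].
  have -> := hLB f a c.
  apply: ApowN_sub; apply: ApowS; apply: ideal1; exact: hf1.
- move: b hb; apply: span_sub; first exact: Apow_subsp.
  move=> _ [x [y [_ hy ->]]]. exact: ApowS (hX _ hy).
Qed.

Lemma Apow_foldl_span k v : Apow k v ->
  span (fun w => exists x xs, size xs = k /\ w = foldl mul x xs) v.
Proof.
elim: k v => [|k IH] v /=.
  by move=> _; apply: span_gen; exists v, [::].
apply: span_sub; first exact: span_subsp.
move=> _ [a [b [hb ->]]].
apply: (mul_span_r (T := span _)); [exact: span_subsp | | exact: IH].
move=> _ [x [xs [hs ->]]]. apply: span_gen; exists x, (rcons xs a).
by rewrite size_rcons hs foldl_rcons mulC.
Qed.

Lemma main_fwd : poisson_solvable mul br -> nlie_solvable br /\ assoc_nilpotent mul.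
Proof.
move=> [s hs]; split.
  by exists s => v /derivedL_P /hs.
exists (2 ^ s).-1 => x xs hsz. apply: hs; apply: Apow_derivedP.
by rewrite -hsz; apply: Apow_foldl.
Qed.

Lemma main_bwd : nlie_solvable br /\ assoc_nilpotent mul -> poisson_solvable mul br.
Proof.
move=> [[s hL] [N hN]].
have hz : forall v, Apow N v -> v = 0.
  move=> v /Apow_foldl_span; apply: (span_sub zero_subsp).
  by move=> _ [x [xs [hsz ->]]]; apply: hN.
have key : forall j v, derived_P mul br (s + j) v -> Apow j.+1 v.
  elim=> [|j IH] v.
    rewrite addn0 => /step1 [l [p [hl hp ->]]].
    by rewrite (hL _ hl) add0r.
  rewrite addnS /=; apply: step2; exact: IH.
exists (s + N)%N => v /key /=.
apply: (span_sub zero_subsp).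
by move=> _ [a [b [hb ->]]]; rewrite (hz _ hb) mulC mul0l.
Qed.

End Aux.

Theorem corollary5p10 (F : closedFieldType) (charF0 : [pchar F] =i pred0)
  (V : vectType F) (n : nat) (hn : (2 <= n)%N)
  (mul : V -> V -> V) (br : ('I_n -> V) -> V)
  (hP : is_poisson_nlie mul br) :
  poisson_solvable mul br <-> nlie_solvable br /\ assoc_nilpotent mul.
Proof.
split; [exact: main_fwd | exact: (main_bwd hn hP)].
Qed.
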